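(* Let $q\ge2$ be an integer and $n\ge1$. On $(n+1)$ qudigits one has $$M_q=\big(H_q^{\otimes(n+1)}\big)^{-1}\,F_q^{-1}\,H_q^{\otimes(n+1)}.$$
   Context: Let $D=\{0,\ldots,q-1\}$. A qudigit is a unit vector $\sum_{k=0}^{q-1}c_k|k\rangle$ in a $q$-dimensional space with orthonormal basis $|0\rangle,\ldots,|q-1\rangle$. The $n$-ary modular addition operator $M_q$ acts on basis states by $M_q|x_1,\ldots,x_n,b\rangle=|x_1,\ldots,x_n,(b+x_1+\cdots+x_n)\bmod q\rangle$. The $n$-ary base-$q$ fanout operator $F_q$ acts by $F_q|x_1,\ldots,x_n,b\rangle=|(x_1+b)\bmod q,\ldots,(x_n+b)\bmod q,b\rangle$. The quantum Fourier transform $H_q$ on one qudigit is $H_q|a\rangle=\frac1{\sqrt q}\sum_{b=0}^{q-1}\zeta^{ab}|b\rangle$ with $\zeta=e^{2\pi i/q}$. *)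

(* Defs.v *)
From mathcomp Require Import all_boot all_order all_algebra.
From mathcomp Require Import reals trigo.
From mathcomp Require Import complex.
Set Implicit Arguments. Unset Strict Implicit. Unset Printing Implicit Defensive.
Import Order.TTheory GRing.Theory Num.Theory.
Local Open Scope ring_scope.
Local Open Scope complex_scope.

(* Computational basis of (n+1) qudigits: |x_1,...,x_n,b>, encoded as a map
   'I_n.+1 -> 'I_q; positions 0..n-1 are x_1..x_n and position n (ord_max)
   is the last digit b. *)
Definition basis (q n : nat) : finType := {ffun 'I_n.+1 -> 'I_q}.

(* An operator on the (q^(n+1))-dimensional space, as a square matrix
   indexed by the enumeration of the basis; entry (y, x) is <y| A |x>. *)
Definition opmx (R : realType) (q n : nat)
    (A : basis q n -> basis q n -> R[i]) : 'M[R[i]]_#|basis q n| :=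
  \matrix_(i, j) A (enum_val i) (enum_val j).

Definition sumx (q n : nat) (x : basis q n) : nat :=
  \sum_(i < n.+1 | i != ord_max) (x i : nat).

Definition Mq_mx (R : realType) (q n : nat) : 'M[R[i]]_#|basis q n| :=
  opmx (fun y x : basis q n =>
    ([forall i : 'I_n.+1, (i != ord_max) ==> (y i == x i :> nat)]
     && ((y ord_max : nat) == ((x ord_max : nat) + sumx x) %% q)%N)%:R).

Definition Fq_mx (R : realType) (q n : nat) : 'M[R[i]]_#|basis q n| :=
  opmx (fun y x : basis q n =>
    ([forall i : 'I_n.+1, (i != ord_max) ==> ((y i : nat) == ((x i : nat) + x ord_max) %% q)%N]
     && (y ord_max == x ord_max))%:R).

Definition zeta (R : realType) (q : nat) : R[i] :=
  Complex (cos (2 * pi / q%:R)) (sin (2 * pi / q%:R)).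

Definition Hq1 (R : realType) (q : nat) (b a : 'I_q) : R[i] :=
  (Num.sqrt (q%:R : R))^-1%:C * zeta R q ^+ (a * b).

(* (n+1)-fold tensor power H_q^{(x)(n+1)}: in the product basis its matrix
   entries are the products of the single-qudigit entries. *)
Definition Hq_tens (R : realType) (q n : nat) : 'M[R[i]]_#|basis q n| :=
  opmx (fun y x : basis q n => \prod_(i < n.+1) @Hq1 R q (y i) (x i)).

(* Main.v *)
Require Import Defs.
From mathcomp Require Import all_boot all_order all_algebra.
From mathcomp Require Import reals trigo complex.
From mathcomp Require Import ring lra zify.
Import Order.TTheory GRing.Theory Num.Theory.
Local Open Scope ring_scope.

Lemma opmxM (R : realType) q n (A B : basis q n -> basis q n -> R[i]) :
  opmx A *m opmx B = opmx (fun y x => \sum_z A y z * B z x).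
Proof.
apply/matrixP => i j; rewrite !mxE.
rewrite [RHS](reindex (@enum_val _ (pred_of_simpl (@predT (basis q n))))) /=.
  by apply: eq_bigr => k _; rewrite !mxE.
by apply: onW_bij; apply: enum_val_bij.
Qed.

Lemma opmx1 (R : realType) q n :
  opmx (fun y x : basis q n => ((y == x)%:R : R[i])) = 1%:M.
Proof.
by apply/matrixP => i j; rewrite !mxE (inj_eq enum_val_inj).
Qed.

Lemma zeta_exp (R : realType) q k :
  zeta R q ^+ k = Complex (cos ((2 * pi / q%:R) *+ k)) (sin ((2 * pi / q%:R) *+ k)).
Proof.
elim: k => [|k IH]; first by rewrite expr0 !mulr0n cos0 sin0.
rewrite exprS IH /zeta; set t := 2 * pi / q%:R.
rewrite mulrS cosD sinD.
by rewrite (addrC (sin t * _)).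
Qed.

Lemma zeta_q (R : realType) q : (0 < q)%N -> zeta R q ^+ q = 1.
Proof.
move=> q0; rewrite zeta_exp.
have -> : (2 * pi / q%:R) *+ q = pi *+ 2 :> R.
  rewrite -mulr_natr divfK; first by rewrite mulr_natl.
  by rewrite pnatr_eq0 -lt0n.
by rewrite cos2pi sin2pi.
Qed.

Lemma zeta_neq1 (R : realType) q m : (0 < m)%N -> (m < q)%N -> zeta R q ^+ m != 1.
Proof.
move=> m0 mq; rewrite zeta_exp.
have q0 : (q%:R : R) != 0 by rewrite pnatr_eq0 -lt0n (leq_trans _ mq).
pose x : R := pi * m%:R / q%:R.
have -> : (2 * pi / q%:R) *+ m = x *+ 2 :> R.
  rewrite /x -[_ *+ m]mulr_natr -[_ *+ 2]mulr_natr; field; exact q0.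
have xgt0 : 0 < x by rewrite /x divr_gt0 ?mulr_gt0 ?pi_gt0 ?ltr0n // (leq_trans _ mq).
have xltpi : x < pi.
  rewrite /x ltr_pdivrMr ?ltr0n ?(leq_trans _ mq) //.
  by rewrite ltr_pM2l ?pi_gt0 // ltr_nat.
have sx : 0 < sin x by apply: sin_gt0_pi; rewrite xgt0 xltpi.
apply/negP => /eqP hc0; have := congr1 (@complex.Re R) hc0 => /= hc.
move: hc; rewrite cos_mulr2n => hc.
have hc2 : cos x ^+ 2 = 1 by move: hc; rewrite -mulr_natr; lra.
have : sin x ^+ 2 == 0 by rewrite sin2cos2 hc2 subrr.
by rewrite expf_eq0 /= gt_eqF.
Qed.

Lemma zeta_mod (R : realType) q a : (0 < q)%N -> zeta R q ^+ a = zeta R q ^+ (a %% q).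
Proof.
move=> q0; by rewrite {1}(divn_eq a q) exprD mulnC exprM zeta_q // expr1n mul1r.
Qed.

Lemma zeta_neq0 (R : realType) q : (0 < q)%N -> zeta R q != 0.
Proof.
move=> q0; apply/negP => /eqP z0; have := @zeta_q R q q0.
by rewrite z0 expr0n gtn_eqF //= => /eqP; rewrite eq_sym oner_eq0.
Qed.

Lemma zeta_inj (R : realType) q a b : (a < q)%N -> (b < q)%N ->
  zeta R q ^+ a = zeta R q ^+ b -> a = b.
Proof.
move=> aq; have q0 : (0 < q)%N by apply: leq_ltn_trans aq.
move: a b aq.
suff H : forall a b, (a <= b)%N -> (a < q)%N -> (b < q)%N ->
  zeta R q ^+ a = zeta R q ^+ b -> a = b.
  move=> a b aq bq e; case: (leqP a b) => h; first exact: H.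
  by symmetry; apply: H => //; apply: ltnW.
move=> a b ab aq bq e; apply/eqP; rewrite eqn_leq ab /=.
rewrite leqNgt; apply/negP => lt.
have : zeta R q ^+ (b - a) != 1.
  by apply: zeta_neq1; rewrite ?subn_gt0 // (leq_ltn_trans (leq_subr _ _)).
apply/negP; rewrite negbK.
move: e; rewrite -{1}(subnKC ab) exprD -{1}[zeta R q ^+ a]mulr1 => /mulfI.
by move=> /(_ (expf_neq0 _ (@zeta_neq0 R q q0))) <-; rewrite eqxx.
Qed.

Lemma geom0 (R : realType) q (w : R[i]) : w ^+ q = 1 -> w != 1 -> \sum_(c < q) w ^+ c = 0.
Proof.
move=> wq w1; have := subrX1 w q; rewrite wq subrr => /esym /eqP.
by rewrite mulf_eq0 subr_eq0 (negbTE w1) /= => /eqP.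
Qed.

Definition Hc1 (R : realType) (q : nat) (b a : 'I_q) : R[i] :=
  ((Num.sqrt (q%:R : R))^-1%:C)%C * zeta R q ^+ (a * b * (q - 1)).

Lemma ssq (R : realType) q : (0 < q)%N ->
  ((Num.sqrt (q%:R : R))^-1%:C)%C * ((Num.sqrt (q%:R : R))^-1%:C)%C * q%:R = 1 :> R[i].
Proof.
move=> q0; rewrite -rmorphM -(rmorph_nat (real_complex R)) -rmorphM.
rewrite -expr2 exprVn sqr_sqrtr ?ler0n // mulVf ?rmorph1 //.
by rewrite pnatr_eq0 -lt0n.
Qed.

Lemma orth1 (R : realType) q (b a : 'I_q) :
  \sum_(c < q) @Hq1 R q b c * Hc1 R q c a = ((b == a)%:R).
Proof.
have q0 : (0 < q)%N by case: q b {a} => // -[].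
set s := ((Num.sqrt (q%:R : R))^-1%:C)%C.
set e := (b + a * (q - 1))%N.
transitivity (s * s * \sum_(c < q) (zeta R q ^+ e) ^+ c).
  rewrite big_distrr; apply: eq_bigr => c _; rewrite /Hq1 /Hc1 -/s -exprM mulrACA -exprD.
  congr (_ * zeta R q ^+ _); rewrite /e mulnDl [(c * b)%N]mulnC; congr addn.
  by rewrite mulnAC.
case: eqP => [ab|nab].
  have -> : zeta R q ^+ e = 1.
    rewrite zeta_mod // /e ab mulnBr muln1 subnKC ?leq_pmulr // modnMl expr0 //.
  by under eq_bigr do rewrite expr1n; rewrite sumr_const card_ord ssq.
rewrite geom0 ?mulr0 //.
  by rewrite exprAC zeta_q // expr1n.
apply/negP => /eqP w1; apply: nab; apply: val_inj; apply: (@zeta_inj R q); rewrite ?ltn_ord //.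
have := @zeta_mod R q (b + a * q) q0; rewrite addnC modnMDl modn_small // => <-.
rewrite -[X in _ = X]mul1r -w1 -exprD /e; congr (_ ^+ _).
by rewrite mulnBr muln1 -addnA subnK ?leq_pmulr // addnC.
Qed.

Lemma opmx_ext (R : realType) q n (A B : basis q n -> basis q n -> R[i]) :
  (forall y x, A y x = B y x) -> opmx A = opmx B.
Proof. by move=> h; apply/matrixP => i j; rewrite !mxE h. Qed.

Lemma prod_eq (R : realType) q n (y x : basis q n) :
  \prod_(i < n.+1) (((y i == x i)%:R) : R[i]) = (y == x)%:R.
Proof.
case: (eqVneq y x) => [->|ne].
  by rewrite big1 // => i _; rewrite eqxx.
have [i hi] : exists i, y i != x i.
  apply/existsP; rewrite -negb_forall; apply: contra ne => /forallP h.
  by apply/eqP/ffunP => i; apply/eqP/h.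
by rewrite (bigD1 i) //= (negbTE hi) mul0r.
Qed.

Definition Hc_tens (R : realType) (q n : nat) : 'M[R[i]]_#|basis q n| :=
  opmx (fun y x : basis q n => \prod_(i < n.+1) @Hc1 R q (y i) (x i)).

Lemma H_Hc (R : realType) q n : Hq_tens R q n *m Hc_tens R q n = 1%:M.
Proof.
rewrite /Hq_tens /Hc_tens opmxM -opmx1; apply: opmx_ext => y x.
rewrite -prod_eq.
under eq_bigr do rewrite -big_split /=.
rewrite -(bigA_distr_bigA (fun i c => @Hq1 R q (y i) c * @Hc1 R q c (x i))).
by apply: eq_bigr => i _; rewrite orth1.
Qed.

Definition omod q (q0 : (0 < q)%N) (k : nat) : 'I_q := Ordinal (ltn_pmod k q0).

Definition fF q n (q0 : (0 < q)%N) (x : basis q n) : basis q n :=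
  [ffun i => if i == ord_max then x i else @omod q q0 (x i + x ord_max)].
Definition fFi q n (q0 : (0 < q)%N) (y : basis q n) : basis q n :=
  [ffun i => if i == ord_max then y i else @omod q q0 (y i + (q - y ord_max))].
Definition fM q n (q0 : (0 < q)%N) (x : basis q n) : basis q n :=
  [ffun i => if i == ord_max then @omod q q0 (x ord_max + sumx x) else x i].

Lemma fF_fFi q n (q0 : (0 < q)%N) y : @fF q n q0 (@fFi q n q0 y) = y.
Proof.
apply/ffunP => i; rewrite /fF /fFi !ffunE eqxx; case: eqP => // _.
apply: val_inj => /=.
rewrite modnDml -addnA subnK; last exact: ltnW.
by rewrite modnDr modn_small.
Qed.

Lemma fFi_fF q n (q0 : (0 < q)%N) x : @fFi q n q0 (@fF q n q0 x) = x.
Proof.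
apply/ffunP => i; rewrite /fF /fFi !ffunE eqxx; case: eqP => // _.
apply: val_inj => /=.
rewrite modnDml -addnA subnKC; last exact: ltnW.
by rewrite modnDr modn_small.
Qed.

Lemma Fq_eq (R : realType) q n (q0 : (0 < q)%N) :
  Fq_mx R q n = opmx (fun y x : basis q n => ((y == @fF q n q0 x)%:R : R[i])).
Proof.
rewrite /Fq_mx; apply: opmx_ext => y x; congr ((nat_of_bool _)%:R); apply/idP/idP.
  case/andP => /forallP h /eqP hn; apply/eqP/ffunP => i; rewrite /fF ffunE.
  case: eqP => [->//|/eqP ne]; apply: val_inj => /=; exact/eqP/(implyP (h i) ne).
move/eqP => ->; rewrite /fF !ffunE !eqxx andbT; apply/forallP => i; apply/implyP => ne.
by rewrite ffunE (negbTE ne).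
Qed.

Lemma Mq_eq (R : realType) q n (q0 : (0 < q)%N) :
  Mq_mx R q n = opmx (fun y x : basis q n => ((y == @fM q n q0 x)%:R : R[i])).
Proof.
rewrite /Mq_mx; apply: opmx_ext => y x; congr ((nat_of_bool _)%:R); apply/idP/idP.
  case/andP => /forallP h /eqP hn; apply/eqP/ffunP => i; rewrite /fM ffunE.
  case: eqP => [->|/eqP ne]; first by apply: val_inj.
  apply: val_inj => /=; exact/eqP/(implyP (h i) ne).
move/eqP => ->; rewrite /fM !ffunE !eqxx andbT; apply/forallP => i; apply/implyP => ne.
by rewrite ffunE (negbTE ne).
Qed.

Lemma Htens_entry (R : realType) q n (y x : basis q n) :
  \prod_(i < n.+1) @Hq1 R q (y i) (x i) =
  ((Num.sqrt (q%:R : R))^-1%:C)%C ^+ n.+1 * zeta R q ^+ (\sum_(i < n.+1) (x i * y i))%N.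
Proof. by rewrite /Hq1 big_split /= prodr_const card_ord prodrXr. Qed.

Lemma key q n (q0 : (0 < q)%N) (y x : basis q n) :
  ((\sum_(i < n.+1) (@fM q n q0 x i * @fFi q n q0 y i)) %% q =
   (\sum_(i < n.+1) (x i * y i)) %% q)%N.
Proof.
rewrite (bigD1 ord_max) //= [in RHS](bigD1 ord_max) //=.
rewrite /fM /fFi !ffunE eqxx /=.
under eq_bigr => i ne do rewrite !ffunE (negbTE ne) /=.
set S := sumx x.
set P := (\sum_(i < n.+1 | i != ord_max) x i * y i)%N.
have yq : (y ord_max <= q)%N by apply: ltnW.
have h1 : (\sum_(i < n.+1 | i != ord_max) x i * ((y i + (q - y ord_max)) %% q)
     = P + S * (q - y ord_max) %[mod q])%N.
  rewrite -modn_summ; under eq_bigr do rewrite modnMmr.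
  rewrite modn_summ /S /sumx big_distrl -big_split /=.
  by under eq_bigr do rewrite mulnDr.
rewrite -modnDm modnMml h1 modnDm.
have E : ((x ord_max + S) * y ord_max + (P + S * (q - y ord_max))
          = S * q + (x ord_max * y ord_max + P))%N.
  have e2 : (S * q = S * y ord_max + S * (q - y ord_max))%N by rewrite -mulnDr subnKC.
  rewrite e2 mulnDl; lia.
by rewrite E modnMDl.
Qed.

Theorem mainTheorem3 (R : realType) (q n : nat) :
  (2 <= q)%N -> (1 <= n)%N ->
  Mq_mx R q n = invmx (Hq_tens R q n) *m invmx (Fq_mx R q n) *m Hq_tens R q n.
Proof.
move=> q2 _; have q0 : (0 < q)%N by apply: leq_trans q2.
have HU : Hq_tens R q n \in unitmx by case: (mulmx1_unit (H_Hc R q n)).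
have FU : Fq_mx R q n \in unitmx.
  pose Fi := opmx (fun y x : basis q n => ((y == @fFi q n q0 x)%:R : R[i])).
  have : Fq_mx R q n *m Fi = 1%:M.
    rewrite (Fq_eq R q n q0) opmxM -opmx1; apply: opmx_ext => y x.
    rewrite (bigD1 (@fFi q n q0 x)) //= fF_fFi eqxx mulr1 [X in _ + X]big1 ?addr0 // => z ne.
    by rewrite (negbTE ne) mulr0.
  by case/mulmx1_unit.
have K : Fq_mx R q n *m Hq_tens R q n *m Mq_mx R q n = Hq_tens R q n.
  rewrite (Fq_eq R q n q0) (Mq_eq R q n q0) /Hq_tens !opmxM; apply: opmx_ext => y x.
  rewrite (bigD1 (@fM q n q0 x)) //= eqxx mulr1 [X in _ + X]big1 ?addr0; last first.
    by move=> z ne; rewrite (negbTE ne) mulr0.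
  rewrite (bigD1 (@fFi q n q0 y)) //= fF_fFi eqxx mul1r [X in _ + X]big1 ?addr0; last first.
    move=> w ne; case: eqP => [e|]; last by rewrite mul0r.
    by move: ne; rewrite e fFi_fF eqxx.
  by rewrite !Htens_entry zeta_mod // key -zeta_mod.
by rewrite -{2}K !mulmxA -(mulmxA _ (invmx _)) mulVmx // mulmx1 mulVmx // mul1mx.
Qed.
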